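(* Let $\mathcal{A}=\{A_1,\dots,A_m\}$ be a bimodal collection of pairwise disjoint nonempty subsets of a finite abelian group $G$, with internal difference groups $H_1,\dots,H_m$, labelled so that $|A_i|<|H_i|$ exactly for $i=1,\dots,r$, where $r\ge2$. Let $D=(a_1+H_1)\setminus A_1$, where $a_1+H_1$ is the coset of $H_1$ containing $A_1$, and suppose $\mathcal{A}$ is in canonical position, i.e. $D$ is a subgroup of $G$. Then $(H_1+H_2+\dots+H_r)\setminus D\subseteq A_1\cup A_2\cup\dots\cup A_m$.
   Context: $G$ is written additively. The internal difference group $H_i$ of $A_i$ is the subgroup generated by all $x-y$ with $x,y\in A_i$; $A_i$ lies in a single coset of $H_i$ and $|A_i|\le|H_i|$. A collection $\{A_1,\dots,A_m\}$ of pairwise disjoint subsets of $G$ is bimodal if for every $i$ and every $\delta\in G\setminus\{0\}$, the number $N_i(\delta)$ of pairs $(a,b)$ with $a\in A_i$, $b\in A_j$ for some $j\neq i$, and $a-b=\delta$, satisfies $N_i(\delta)\in\{0,|A_i|\}$. (For such collections with $r\ge2$ the set $D$ equals $(a_i+H_i)\setminus A_i$ for every $i\le r$ and is a coset of a subgroup; canonical position means the collection has been translated so that $D$ is a subgroup.) *)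

(* Defs.v *)
From mathcomp Require Import all_boot all_order all_algebra.
Set Implicit Arguments. Unset Strict Implicit. Unset Printing Implicit Defensive.
Import GRing.Theory.
Local Open Scope ring_scope.

Section Defs.
Variable G : finZmodType.

Definition is_subgroup (S : {set G}) : bool :=
  (0 \in S) && [forall x in S, forall y in S, x - y \in S].

Definition gen_subgroup (X : {set G}) : {set G} :=
  [set h | [forall S : {set G}, (is_subgroup S && (X \subset S)) ==> (h \in S)]].

Definition diff_group (A : {set G}) : {set G} :=
  gen_subgroup [set x - y | x in A, y in A].

Definition Ncount m (A : 'I_m -> {set G}) (i : 'I_m) (delta : G) : nat :=
  #|[set p : G * G | (p.1 \in A i) && [exists j : 'I_m, (j != i) && (p.2 \in A j)]
                      && (p.1 - p.2 == delta)]|.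

Definition pairwise_disjoint m (A : 'I_m -> {set G}) : Prop :=
  forall i j : 'I_m, i != j -> [disjoint A i & A j].

Definition bimodal m (A : 'I_m -> {set G}) : Prop :=
  pairwise_disjoint A /\
  forall (i : 'I_m) (delta : G), delta != 0 ->
    Ncount A i delta = 0%N \/ Ncount A i delta = #|A i|.

Definition sum_first m (r : nat) (H : 'I_m -> {set G}) : {set G} :=
  [set x | [exists h : {ffun 'I_m -> G},
     [forall i : 'I_m, (i < r)%N ==> (h i \in H i)] &&
     (x == \sum_(i < m | (i < r)%N) h i)]].

Definition coset_of_el (a : G) (H : {set G}) : {set G} := [set a + h | h in H].
End Defs.

(* Main.v *)
Require Import Defs.
From mathcomp Require Import all_boot all_order all_algebra.
Import GRing.Theory.
Local Open Scope ring_scope.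
Set Implicit Arguments. Unset Strict Implicit.

Lemma subg0 (G : finZmodType) (S : {set G}) : is_subgroup S -> 0 \in S.
Proof. by case/andP. Qed.

Lemma subgB (G : finZmodType) (S : {set G}) x y :
  is_subgroup S -> x \in S -> y \in S -> x - y \in S.
Proof. by case/andP=> _ /forallP H xS yS; move: (H x); rewrite xS /= => /forallP /(_ y); rewrite yS. Qed.

Lemma subgN (G : finZmodType) (S : {set G}) x :
  is_subgroup S -> x \in S -> - x \in S.
Proof. move=> sS xS; have := subgB sS (subg0 sS) xS; by rewrite sub0r. Qed.

Lemma subgD (G : finZmodType) (S : {set G}) x y :
  is_subgroup S -> x \in S -> y \in S -> x + y \in S.
Proof. move=> sS xS yS; rewrite -(opprK y); apply: subgB => //; exact: subgN. Qed.

Lemma gen_is (G : finZmodType) (X : {set G}) : is_subgroup (gen_subgroup X).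
Proof.
apply/andP; split.
  by rewrite inE; apply/forallP=> S; apply/implyP=> /andP[sS _]; exact: subg0.
apply/forallP=> x; apply/implyP; rewrite inE => /forallP Hx.
apply/forallP=> y; apply/implyP; rewrite inE => /forallP Hy.
rewrite inE; apply/forallP=> S; apply/implyP=> hS.
move: (Hx S) (Hy S); rewrite hS /= => xS yS; case/andP: hS => sS _; exact: subgB.
Qed.

Lemma gen_min (G : finZmodType) (X S : {set G}) x :
  is_subgroup S -> X \subset S -> x \in gen_subgroup X -> x \in S.
Proof. by move=> sS XS; rewrite inE => /forallP /(_ S); rewrite sS XS. Qed.

Lemma gen_ge (G : finZmodType) (X : {set G}) x : x \in X -> x \in gen_subgroup X.
Proof.
move=> xX; rewrite inE; apply/forallP=> S; apply/implyP=> /andP[_ /subsetP]; exact.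
Qed.

Lemma diff_is (G : finZmodType) (A : {set G}) : is_subgroup (diff_group A).
Proof. exact: gen_is. Qed.

Lemma diff_mem (G : finZmodType) (A : {set G}) x y :
  x \in A -> y \in A -> x - y \in diff_group A.
Proof. move=> xA yA; apply: gen_ge; apply/imset2P; by exists x y. Qed.

Lemma mem_coset (G : finZmodType) (a : G) H y :
  (y \in coset_of_el a H) = (y - a \in H).
Proof.
apply/imsetP/idP => [[h hH ->]|yH]; first by rewrite addrC addKr.
by exists (y - a) => //; rewrite addrC subrK.
Qed.
Definition Wp (G : finZmodType) m (A : 'I_m -> {set G}) (i : 'I_m) (x : G) : bool :=
  [exists j, (j != i) && (x \in A j)].

Lemma shift (G : finZmodType) m (A : 'I_m -> {set G}) i a a' x :
  bimodal A -> a \in A i -> a' \in A i -> Wp A i x -> Wp A i (x + (a' - a)).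
Proof.
case=> disj bim Ha Ha' Wx.
have d0 : a - x != 0.
  rewrite subr_eq0; apply/eqP=> E; case/existsP: Wx => j /andP[ji xj].
  by move: (disjointFr (disj _ _ ji) xj); rewrite -E Ha.
set S := [set p : G * G | (p.1 \in A i) && [exists j : 'I_m, (j != i) && (p.2 \in A j)]
                      && (p.1 - p.2 == a - x)].
have inS : (a, x) \in S by rewrite inE /= Ha eqxx andbT; exact: Wx.
have NS : Ncount A i (a - x) = #|S| by [].
case: (bim i _ d0) => E.
  by move: inS; rewrite (cards0_eq (etrans (esym NS) E)) inE.
have inj : {in S &, injective (fun p : G * G => p.1)}.
  move=> [p1 p2] [q1 q2]; rewrite !inE /= => /andP[_ /eqP e1] /andP[_ /eqP e2] /= e.
  subst q1; congr pair.
  have : p2 = p1 - (p1 - p2) by rewrite opprB addrC subrK.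
  have : q2 = p1 - (p1 - q2) by rewrite opprB addrC subrK.
  by rewrite e1 e2 => -> ->.
have sub : [set p.1 | p in S] \subset A i.
  by apply/subsetP=> y /imsetP[p]; rewrite inE => /andP[/andP[? _] _] ->.
have card : #|[set p.1 | p in S]| = #|A i| by rewrite card_in_imset // -NS E.
move/(subset_cardP card): sub => eqi.
move: (eqi a'); rewrite Ha' => /imsetP[p].
rewrite inE => /andP[/andP[_ Wp2] /eqP e] ->.
have -> : x + (p.1 - a) = p.2.
  have : p.2 = p.1 - (p.1 - p.2) by rewrite opprB addrC subrK.
  by rewrite e opprB addrCA => ->.
exact: Wp2.
Qed.
Lemma period (G : finZmodType) m (A : 'I_m -> {set G}) i h x :
  bimodal A -> h \in diff_group (A i) -> Wp A i x = Wp A i (x + h).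
Proof.
move=> bA hH.
set S := [set h : G | [forall x, Wp A i x == Wp A i (x + h)]].
suff : h \in S by rewrite inE => /forallP /(_ x) /eqP.
apply: gen_min hH.
  apply/andP; split; first by rewrite inE; apply/forallP=> y; rewrite addr0.
  apply/forallP=> u; apply/implyP; rewrite inE => /forallP Hu.
  apply/forallP=> v; apply/implyP; rewrite inE => /forallP Hv.
  rewrite inE; apply/forallP=> y.
  move/eqP: (Hu y) => ->; move/eqP: (Hv (y + (u - v))) => ->.
  by rewrite addrA subrK.
apply/subsetP=> d /imset2P[a' a Ha' Ha ->]; rewrite inE; apply/forallP=> y.
apply/eqP; apply/idP/idP => [Wy|Wy']; first exact: shift.
have := shift bA Ha' Ha Wy'.
have e : (a' - a) + (a - a') = 0 by rewrite addrC addrA subrK subrr.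
by rewrite -addrA e addr0.
Qed.

Lemma WpU (G : finZmodType) m (A : 'I_m -> {set G}) i x :
  Wp A i x -> x \in \bigcup_(j < m) A j.
Proof. by case/existsP=> j /andP[_ xj]; apply/bigcupP; exists j. Qed.

Lemma Qp (G : finZmodType) m (A : 'I_m -> {set G}) i k u h :
  bimodal A -> u \in A k -> k != i -> h \in diff_group (A i) ->
  u + h \in \bigcup_(j < m) A j.
Proof.
move=> bA uk ki hH; apply: (@WpU _ _ _ i).
rewrite -period //; apply/existsP; exists k; by rewrite ki.
Qed.

Lemma Qm (G : finZmodType) m (A : 'I_m -> {set G}) i a x h :
  bimodal A -> a \in A i -> x \notin \bigcup_(j < m) A j ->
  x - a \notin diff_group (A i) -> h \in diff_group (A i) ->
  x + h \notin \bigcup_(j < m) A j.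
Proof.
move=> bA ai xU xa hH; apply/negP=> /bigcupP[k _ xk].
case: (eqVneq k i) => [ki|ki].
  subst k; have := diff_mem xk ai.
  move=> H; move: xa; rewrite -(addrK h x) addrAC.
  by rewrite (subgB (diff_is _) H hH).
have W : Wp A i (x + h) by apply/existsP; exists k; rewrite ki.
have := period x bA hH; rewrite W => /WpU; by rewrite (negbTE xU).
Qed.

Lemma KU (G : finZmodType) m (A : 'I_m -> {set G}) i k a y :
  bimodal A -> a \in A i -> y - a \in diff_group (A i) -> y \in A k -> k = i.
Proof.
move=> bA ai ya yk; apply/eqP; apply/negPn/negP=> ki.
have hH : a - y \in diff_group (A i) by rewrite -opprB; apply: subgN (diff_is _) ya.
have W : Wp A i y by apply/existsP; exists k; rewrite ki.
move: W; rewrite (period y bA hH) addrC subrK => /existsP[j /andP[ji aj]].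
case: bA => disj _; by move: (disjointFr (disj _ _ ji) aj); rewrite ai.
Qed.
Lemma sum_step (G : finZmodType) m (hf : 'I_m -> G) k (km : (k < m)%N) :
  \sum_(i < m | (i < k.+1)%N) hf i = hf (Ordinal km) + \sum_(i < m | (i < k)%N) hf i.
Proof.
rewrite (bigD1 (Ordinal km)) //=; congr (_ + _); apply: eq_bigl => i.
rewrite -val_eqE /= ltnS leq_eqVlt; by case: ltngtP.
Qed.

Lemma sum_induct (G : finZmodType) m r (H : 'I_m -> {set G}) (H0 : {set G}) (T : pred G)
  (rm : (r <= m)%N) :
  is_subgroup H0 -> (forall i, is_subgroup (H i)) ->
  (forall i : 'I_m, (i < r)%N -> forall x, T x -> x \in H i -> x \in H0) ->
  (forall i : 'I_m, (i < r)%N -> forall x, T x -> x \in H0 -> x \in H i) ->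
  (forall i : 'I_m, (i < r)%N -> forall x h, T x -> x \notin H i -> h \in H i -> T (x + h)) ->
  forall k, (k <= r)%N -> forall hf : 'I_m -> G, (forall i : 'I_m, (i < r)%N -> hf i \in H i) ->
  T (\sum_(i < m | (i < k)%N) hf i) -> \sum_(i < m | (i < k)%N) hf i \in H0.
Proof.
move=> sH0 sH L2 L3 Q; elim=> [|k IH] kr hf hH.
  by rewrite big_pred0 // => _; rewrite subg0.
have km : (k < m)%N by apply: leq_trans kr rm.
have ir : (Ordinal km < r)%N by [].
rewrite sum_step => Tx.
case xH: (hf (Ordinal km) + \sum_(i < m | (i < k)%N) hf i \in H (Ordinal km)).
  exact: L2 ir _ Tx xH.
have hk := hH _ ir.
have Ts : T (\sum_(i < m | (i < k)%N) hf i).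
  have := Q _ ir _ _ Tx (negbT xH) (subgN (sH _) hk).
  by rewrite addrC addKr.
have s0 := IH (ltnW kr) hf hH Ts.
have := L3 _ ir _ Ts s0 => sk.
by move: xH; rewrite (subgD (sH _) hk sk).
Qed.
Theorem proposition3p7 (G : finZmodType) (m r : nat) (A : 'I_m -> {set G})
  (i0 : 'I_m) (a1 : G) :
  bimodal A ->
  (forall i : 'I_m, A i != set0) ->
  (2 <= r)%N -> (r <= m)%N ->
  (forall i : 'I_m, (#|A i| < #|diff_group (A i)|)%N = (i < r)%N) ->
  nat_of_ord i0 = 0%N ->
  a1 \in A i0 ->
  is_subgroup (coset_of_el a1 (diff_group (A i0)) :\: A i0) ->
  sum_first r (fun i => diff_group (A i)) :\: (coset_of_el a1 (diff_group (A i0)) :\: A i0)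
    \subset \bigcup_(i < m) A i.
Proof.
move=> bA ne r2 rm hcard i00 a1A Dsub.
set U := \bigcup_(i < m) A i.
set H := fun i => diff_group (A i).
have sH : forall i, is_subgroup (H i) by move=> i; exact: diff_is.
have AU : forall i x, x \in A i -> x \in U by move=> i x xi; apply/bigcupP; exists i.
have := subg0 Dsub; rewrite in_setD mem_coset sub0r => /andP[n0A0 na1].
have a1H : a1 \in H i0 by rewrite -(opprK a1); exact: subgN.
have uH0 : forall k y, y \in H i0 -> y \in A k -> k = i0.
  move=> k y yH yk; apply: (KU bA a1A _ yk); exact: (subgB (sH i0) yH a1H).
have nH0 : forall x, x \notin H i0 -> x - a1 \notin H i0.
  move=> x; apply: contra => xa; rewrite -(subrK a1 x); exact: subgD.
have L2 : forall i : 'I_m, forall x, x \notin U -> x \in H i -> x \in H i0.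
  move=> i x xU xH; case: (eqVneq i i0) => [e|ii0]; first by rewrite -e.
  apply/negPn/negP => xn.
  have := Qm bA a1A xU (nH0 _ xn) a1H.
  by rewrite addrC (Qp bA a1A _ xH) // eq_sym.
have L1 : forall i : 'I_m, (i < r)%N -> exists2 a, a \in A i & a \in H i.
  move=> i ir; case: (eqVneq i i0) => [->|ii0]; first by exists a1.
  case/set0Pn: (ne i) => a ai; exists a => //.
  apply/negPn/negP => na.
  have hT : forall h, h \in H i -> h \notin U.
    move=> h hH; rewrite -(add0r h); apply: (Qm bA ai) => //.
      apply/negP => /bigcupP [k _ k0]; have e := uH0 k 0 (subg0 (sH _)) k0.
      by subst k; rewrite k0 in n0A0.
    by rewrite sub0r; apply: contra na => /(subgN (sH _)); rewrite opprK.
  have [t tK tU] : exists2 t, t - a \in H i & t \notin U.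
    have : ~~ (coset_of_el a (H i) \subset A i).
      apply: contraL ir => /subset_leq_card.
      rewrite -hcard card_imset; last exact: addrI.
      by rewrite -leqNgt.
    case/subsetPn=> t; rewrite mem_coset => tK tA; exists t => //.
    apply/negP => /bigcupP [k _ tk]; have e := KU bA ai tK tk.
    by subst k; rewrite tk in tA.
  have atH : a - t \in H i by rewrite -opprB; exact: subgN.
  have a1Hi : a1 \notin H i by apply: contraL (AU _ _ a1A); exact: hT.
  case: (boolP (t \in H i0)) => tH0.
    case: (boolP (a - t \in H i0)) => h0.
      have aH0 : a \in H i0 by rewrite -(subrK t a); exact: (subgD (sH _) h0 tH0).
      by move: (uH0 i a aH0 ai) ii0 => ->; rewrite eqxx.
    have := Qm bA a1A (hT _ atH) (nH0 _ h0) tH0.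
    by rewrite subrK (AU _ _ ai).
  have yU := Qm bA a1A tU (nH0 _ tH0) a1H.
  have ya : t + a1 - a \notin H i.
    apply: contra a1Hi => ya; rewrite -(addKr t a1).
    have -> : - t + (t + a1) = (t + a1 - a) - (t - a).
      by rewrite addKr opprB addrA subrK addrAC subrr add0r.
    exact: subgB.
  have := Qm bA ai yU ya atH.
  have -> : t + a1 + (a - t) = a + a1.
    by rewrite addrC addrA subrK addrC.
  by rewrite (Qp bA ai ii0 a1H).
have L3 : forall i : 'I_m, (i < r)%N -> forall x, x \notin U -> x \in H i0 -> x \in H i.
  move=> i ir x xU xH; case: (eqVneq i i0) => [->|ii0]; first done.
  case: (L1 i ir) => a ai aH; apply/negPn/negP => xn.
  have xa : x - a \notin H i.
    by apply: contra xn => xa; rewrite -(subrK a x); exact: subgD.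
  have := Qm bA ai xU xa aH.
  by rewrite addrC (Qp bA ai ii0 xH).
have Q : forall i : 'I_m, (i < r)%N -> forall x h, x \notin U -> x \notin H i ->
    h \in H i -> x + h \notin U.
  move=> i ir x h xU xn hH; case: (L1 i ir) => a ai aH.
  apply: (Qm bA ai) => //.
  by apply: contra xn => xa; rewrite -(subrK a x); exact: subgD.
apply/subsetP=> x; rewrite in_setD => /andP[xD].
rewrite inE => /existsP[hf /andP[/forallP hH /eqP xE]].
apply/negPn/negP => xU.
have : x \in H i0.
  rewrite xE; apply: (@sum_induct G m r H (H i0) (fun x => x \notin U) rm (sH _) sH
     (fun i _ => L2 i) L3 Q r (leqnn r) hf) => //.
    by move=> i ir; move/implyP: (hH i); apply.
  by rewrite -xE.
move=> xH; move: xD; rewrite in_setD mem_coset (subgB (sH _) xH a1H) andbT.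
by rewrite (contra (AU i0 x) xU).
Qed.
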